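(* Let $W_0,W_1,\dots\subseteq C^\omega$ be prefix-independent $\Sigma_2^0$ objectives, $\kappa$ a cardinal, and $U_0,U_1,\dots$ $C$-graphs such that each $U_i$ is $(\kappa,W_i)$-universal for prefix-independent objectives. Let $W=\bigcup_iW_i$ and let $U$ be the direct sum of the $U_i$'s. Then $U\ltimes\kappa$ is $(\kappa,W)$-universal for prefix-independent objectives.
   Context: An objective $W\subseteq C^\omega$ is $\Sigma_2^0$ if $W=\{w: w\text{ has finitely many prefixes in }L\}$ for some $L\subseteq C^*$; prefix-independent if $uw\in W\iff w\in W$. A $C$-pregraph: vertex set $V(G)$, edges $E(G)\subseteq V(G)\times C\times V(G)$ written $v\xrightarrow{c}v'$; a $C$-graph if no sinks; a $C$-pretree is a $C$-pregraph with a root $t_0$ such that each vertex has a unique path from $t_0$. A morphism maps vertices so edges go to edges of the same colour. A (pre)graph satisfies $W$ if every infinite path from every vertex has colour sequence in $W$. A $C$-graph $U$ is $(\kappa,W)$-universal for prefix-independent objectives if $U$ satisfies $W$ and every $C$-pretree of cardinality $<\kappa$ satisfying $W$ admits a morphism into $U$. The direct sum of $(G_\lambda)_{\lambda<\alpha}$ (indexed by an ordinal; here $\alpha=\omega$) is their disjoint union together with all edges $v\xrightarrow{c}v'$, $c\in C$, with $v\in V(G_\lambda)$, $v'\in V(G_{\lambda'})$, $\lambda>\lambda'$. For a graph $U$ and ordinal $\alpha$, $U\ltimes\alpha$ has vertices $V(U)\times\alpha$ and edges $(v,\lambda)\xrightarrow{c}(v',\lambda')$ whenever $\lambda>\lambda'$,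 or $\lambda=\lambda'$ and $v\xrightarrow{c}v'\in E(U)$. *)

(* Defs.v *)
From Stdlib Require Import List Arith.
Import ListNotations.



Definition prefix {C : Type} (w : nat -> C) (n : nat) : list C :=
  map w (seq 0 n).

Definition concat {C : Type} (u : list C) (w : nat -> C) : nat -> C :=
  fun n => match nth_error u n with
           | Some c => c
           | None => w (n - length u)
           end.

Definition Sigma02 {C : Type} (W : (nat -> C) -> Prop) : Prop :=
  exists L : list C -> Prop,
    forall w, W w <-> exists N, forall n, N <= n -> ~ L (prefix w n).

Definition prefix_independent {C : Type} (W : (nat -> C) -> Prop) : Prop :=
  forall (u : list C) (w : nat -> C), W (concat u w) <-> W w.

Record pregraph (C : Type) := Pregraph {
  vert : Type;
  edge : vert -> C -> vert -> Prop }.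

Arguments vert {C}.
Arguments edge {C}.

Definition is_graph {C : Type} (G : pregraph C) : Prop :=
  forall v : vert G, exists c v', edge G v c v'.

(* finite path from x given as its sequence of edges (colour, target) *)
Fixpoint fpath {C : Type} (G : pregraph C) (x : vert G) (s : list (C * vert G)) : Prop :=
  match s with
  | [] => True
  | (c, y) :: s' => edge G x c y /\ fpath G y s'
  end.

Definition fpath_end {C : Type} (G : pregraph C) (x : vert G) (s : list (C * vert G)) : vert G :=
  last (map snd s) x.

Definition is_pretree {C : Type} (G : pregraph C) (t0 : vert G) : Prop :=
  forall v : vert G, exists! s : list (C * vert G), fpath G t0 s /\ fpath_end G t0 s = v.

Definition is_morphism {C : Type} (G H : pregraph C) (f : vert G -> vert H) : Prop :=
  forall x c y, edge G x c y -> edge H (f x) c (f y).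

Definition satisfies {C : Type} (G : pregraph C) (W : (nat -> C) -> Prop) : Prop :=
  forall (p : nat -> vert G) (c : nat -> C),
    (forall n, edge G (p n) (c n) (p (S n))) -> W c.

Definition card_le (A B : Type) : Prop := exists f : A -> B, forall x y, f x = f y -> x = y.
Definition card_lt (A B : Type) : Prop := card_le A B /\ ~ card_le B A.

(* kappa as a cardinal: an initial ordinal, i.e. a strict well-order (K, lt)
   each of whose proper initial segments has cardinality < |K| *)
Definition is_cardinal (K : Type) (lt : K -> K -> Prop) : Prop :=
  well_founded lt /\
  (forall x y z, lt x y -> lt y z -> lt x z) /\
  (forall x y, lt x y \/ x = y \/ lt y x) /\
  (forall x : K, card_lt {y : K | lt y x} K).

Definition universal {C : Type} (K : Type) (W : (nat -> C) -> Prop) (U : pregraph C) : Prop :=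
  is_graph U /\ satisfies U W /\
  forall (T : pregraph C) (t0 : vert T),
    is_pretree T t0 -> card_lt (vert T) K -> satisfies T W ->
    exists f : vert T -> vert U, is_morphism T U f.

Definition direct_sum {C : Type} (G : nat -> pregraph C) : pregraph C :=
  {| vert := {i : nat & vert (G i)};
     edge := fun x c y =>
       projT1 y < projT1 x \/
       exists i (v v' : vert (G i)),
         x = existT _ i v /\ y = existT _ i v' /\ edge (G i) v c v' |}.

Definition lex_prod {C : Type} (U : pregraph C) (K : Type) (lt : K -> K -> Prop) : pregraph C :=
  {| vert := (vert U * K)%type;
     edge := fun x c y =>
       lt (snd y) (snd x) \/ (snd y = snd x /\ edge U (fst x) c (fst y)) |}.

(* Main.v *)
Require Import Defs.
From Stdlib Require Import List Arith Lia Classical ClassicalEpsilon FunctionalExtensionality Eqdep_dec.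
Import ListNotations.

Lemma fpath_end_nil {C} (G : pregraph C) x : fpath_end G x [] = x.
Proof. reflexivity. Qed.

Lemma last_cons_any {A} (l : list A) : forall (y x : A), last (y :: l) x = last l y.
Proof.
  induction l as [|a l IH]; intros y x; [reflexivity|].
  change (last (a :: l) x = last (a :: l) y). rewrite (IH a x), (IH a y). reflexivity.
Qed.

Lemma fpath_end_cons {C} (G : pregraph C) x c y s :
  fpath_end G x ((c, y) :: s) = fpath_end G y s.
Proof. unfold fpath_end. simpl. apply last_cons_any. Qed.

Lemma fpath_app {C} (G : pregraph C) s1 s2 x :
  fpath G x (s1 ++ s2) <-> fpath G x s1 /\ fpath G (fpath_end G x s1) s2.
Proof.
  revert x; induction s1 as [|[c y] s1 IH]; intros x; simpl.
  - tauto.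
  - rewrite fpath_end_cons, IH. tauto.
Qed.

Lemma fpath_end_app {C} (G : pregraph C) s1 s2 x :
  fpath_end G x (s1 ++ s2) = fpath_end G (fpath_end G x s1) s2.
Proof.
  revert x; induction s1 as [|[c y] s1 IH]; intros x; simpl.
  - reflexivity.
  - rewrite !fpath_end_cons. apply IH.
Qed.

Lemma concat_lt {A} (c w : nat -> A) N n : n < N -> Defs.concat (prefix c N) w n = c n.
Proof.
  intros H. unfold Defs.concat, prefix. rewrite nth_error_map, nth_error_seq.
  destruct (Nat.ltb_spec n N); [reflexivity|lia].
Qed.

Lemma concat_ge {A} (c w : nat -> A) N n : N <= n -> Defs.concat (prefix c N) w n = w (n - N).
Proof.
  intros H. unfold Defs.concat, prefix. rewrite nth_error_map, nth_error_seq.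
  destruct (Nat.ltb_spec n N); [lia|]. simpl. rewrite length_map, length_seq. reflexivity.
Qed.

Lemma shift_W {C} (W : (nat -> C) -> Prop) (c : nat -> C) M :
  prefix_independent W -> (W c <-> W (fun n => c (M + n))).
Proof.
  intros Hpi.
  assert (E : c = Defs.concat (prefix c M) (fun n => c (M + n))).
  { apply functional_extensionality; intros n.
    destruct (Nat.lt_ge_cases n M).
    - rewrite concat_lt; auto.
    - rewrite concat_ge by auto. f_equal. lia. }
  rewrite E at 1. apply Hpi.
Qed.

Lemma wf_irrefl {A} (lt : A -> A -> Prop) : well_founded lt -> forall x, ~ lt x x.
Proof.
  intros wf x. induction (wf x) as [x _ IH]. intros H. exact (IH x H H).
Qed.

Lemma wf_eventually {A} (lt : A -> A -> Prop) :
  well_founded lt -> (forall x y z, lt x y -> lt y z -> lt x z) ->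
  forall k : nat -> A, (forall n, lt (k (S n)) (k n) \/ k (S n) = k n) ->
  exists N, forall n, N <= n -> k n = k N.
Proof.
  intros wf tr k.
  remember (k 0) as a eqn:Ea. revert k Ea.
  induction (wf a) as [a _ IH]. intros k Ea Hk.
  assert (Hle : forall n, lt (k n) a \/ k n = a).
  { induction n. - right; auto.
    - destruct (Hk n) as [H|H]; destruct IHn as [H'|H'].
      + left; eauto.
      + left; subst; rewrite <- H'; auto.
      + left; rewrite H; auto.
      + right; rewrite H; auto. }
  destruct (classic (forall n, k n = a)) as [Hall|Hn].
  - exists 0. intros n _. rewrite Hall, Hall. reflexivity.
  - apply not_all_ex_not in Hn. destruct Hn as [m Hm].
    destruct (Hle m) as [Hlt|]; [|contradiction].
    destruct (IH (k m) Hlt (fun n => k (m + n)) (f_equal k (eq_sym (Nat.add_0_r m)))) as [N HN].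
    + intros n. rewrite Nat.add_succ_r. apply Hk.
    + exists (m + N). intros n Hn. specialize (HN (n - m)).
      replace (m + (n - m)) with n in HN by lia. apply HN. lia.
Qed.

Lemma sig_eq {A} (P : A -> Prop) (a b : sig P) : proj1_sig a = proj1_sig b -> a = b.
Proof.
  destruct a as [a pa], b as [b pb]; simpl; intros ->. f_equal. apply proof_irrelevance.
Qed.

Lemma nat_min (P : nat -> Prop) : (exists i, P i) -> exists i, P i /\ forall j, P j -> i <= j.
Proof.
  intros [i Hi]. induction i as [i IH] using (well_founded_induction lt_wf).
  destruct (classic (exists j, P j /\ j < i)) as [[j [Hj Hji]]|Hn].
  - exact (IH j Hji Hj).
  - exists i. split; auto. intros j Hj. destruct (Nat.lt_ge_cases j i); auto.
    exfalso; apply Hn; eauto.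
Qed.

Definition sched (k : nat) : nat := k - Nat.sqrt k * Nat.sqrt k.

Lemma sched_inf i N : exists k, N <= k /\ sched k = i.
Proof.
  exists ((N + i) * (N + i) + i). split; [nia|].
  unfold sched. rewrite (Nat.sqrt_unique _ (N + i)) by nia. lia.
Qed.

Definition Good {C} (T : pregraph C) (Wi : (nat -> C) -> Prop) (R : vert T -> Prop) (t : vert T) : Prop :=
  forall (p : nat -> vert T) (c : nat -> C), p 0 = t ->
    (forall n, edge T (p n) (c n) (p (S n))) -> (forall n, R (p n)) -> Wi c.

Lemma Good_succ {C} (T : pregraph C) Wi R t c t' :
  prefix_independent Wi -> Good T Wi R t -> R t -> R t' -> edge T t c t' -> Good T Wi R t'.
Proof.
  intros Hpi HG Rt Rt' He p c' H0 Hp HR.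
  set (p2 := fun n => match n with 0 => t | S m => p m end).
  set (c2 := fun n => match n with 0 => c | S m => c' m end).
  assert (HW : Wi c2).
  { apply (HG p2 c2 eq_refl).
    - intros [|n]; simpl; [subst; auto | apply Hp].
    - intros [|n]; simpl; auto. }
  apply (shift_W Wi c2 1 Hpi) in HW. exact HW.
Qed.

Lemma no_bad_region {C} (T : pregraph C) (W : nat -> (nat -> C) -> Prop)
  (L : nat -> list C -> Prop)
  (HL : forall i w, W i w <-> exists N, forall n, N <= n -> ~ L i (prefix w n))
  (Hpi : forall i, prefix_independent (W i))
  (Hsat : satisfies T (fun w => exists i, W i w))
  (R : vert T -> Prop) (HR : forall v i, R v -> ~ Good T (W i) R v)
  (v0 : vert T) (Hv0 : R v0) : False.
Proof.
  set (Inv := fun x : (nat -> vert T) * (nat -> C) * nat =>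
     (forall n, edge T (fst (fst x) n) (snd (fst x) n) (fst (fst x) (S n))) /\
     forall n, R (fst (fst x) n)).
  set (St := sig Inv).
  set (rel := fun k (s s' : St) =>
     let '(p, c, N) := proj1_sig s in let '(p', c', N') := proj1_sig s' in
     N < N' /\ (forall n, n <= N -> p' n = p n) /\ (forall n, n < N -> c' n = c n) /\
     L (sched k) (prefix c' N')).
  assert (Hstep : forall k (s : St), exists s' : St, rel k s s').
  { intros k [[[p c] N] [Hp HRp]]. simpl in Hp, HRp.
    apply NNPP; intro Hno.
    apply (HR (p N) (sched k) (HRp N)).
    intros p1 c1 E0 Hp1 HR1. apply NNPP; intro HnW. apply HnW.
    apply (Hpi _ (prefix c N) c1). apply HL. exists (S N). intros n Hn HLn.
    apply Hno.
    assert (Hinv : Inv (Defs.concat (prefix p N) p1, Defs.concat (prefix c N) c1, n)).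
    { split; simpl.
      - intros m. destruct (Nat.lt_ge_cases m N).
        + rewrite !concat_lt by auto.
          destruct (Nat.lt_ge_cases (S m) N).
          * rewrite concat_lt by auto. apply Hp.
          * rewrite concat_ge by auto. replace (S m - N) with 0 by lia.
            rewrite E0. replace N with (S m) by lia. apply Hp.
        + rewrite !concat_ge by lia. replace (S m - N) with (S (m - N)) by lia. apply Hp1.
      - intros m. destruct (Nat.lt_ge_cases m N).
        + rewrite concat_lt by auto. apply HRp.
        + rewrite concat_ge by auto. apply HR1. }
    exists (exist _ _ Hinv). simpl. split; [lia|]. split; [|split].
    - intros m Hm. destruct (Nat.lt_ge_cases m N).
      + apply concat_lt; auto.
      + rewrite concat_ge by auto. replace (m - N) with 0 by lia. rewrite E0. f_equal. lia.
    - intros m Hm. apply concat_lt; auto.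
    - apply NNPP; intro H; apply H; exact HLn. }
  assert (Hinit : exists s : St, True).
  { apply NNPP; intro Hno. apply (HR v0 0 Hv0). intros p c _ Hp HRp. exfalso. apply Hno.
    assert (Hinv : Inv (p, c, 0)) by (split; auto).
    exists (exist _ _ Hinv). auto. }
  destruct Hinit as [s0 _].
  set (nxt := fun k s => proj1_sig (constructive_indefinite_description _ (Hstep k s))).
  set (sq := nat_rect (fun _ => St) s0 (fun k s => nxt k s)).
  assert (Hrel : forall k, rel k (sq k) (sq (S k))).
  { intros k. simpl. unfold nxt. exact (proj2_sig (constructive_indefinite_description _ _)). }
  set (P := fun k => fst (fst (proj1_sig (sq k)))).
  set (Cc := fun k => snd (fst (proj1_sig (sq k)))).
  set (NN := fun k => snd (proj1_sig (sq k))).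
  assert (Hrel' : forall k, NN k < NN (S k) /\ (forall n, n <= NN k -> P (S k) n = P k n) /\
                    (forall n, n < NN k -> Cc (S k) n = Cc k n) /\
                    L (sched k) (prefix (Cc (S k)) (NN (S k)))).
  { intros k. specialize (Hrel k). unfold rel in Hrel. unfold P, Cc, NN.
    destruct (proj1_sig (sq k)) as [[p c] N].
    destruct (proj1_sig (sq (S k))) as [[p' c'] N']. exact Hrel. }
  assert (Hmono : forall k d, NN k <= NN (k + d)).
  { intros k d; induction d. - rewrite Nat.add_0_r; auto.
    - rewrite Nat.add_succ_r. pose proof (proj1 (Hrel' (k + d))). lia. }
  assert (Hge : forall k, k <= NN k).
  { induction k; [lia|]. pose proof (proj1 (Hrel' k)). lia. }
  assert (HagP : forall k d n, n <= NN k -> P (k + d) n = P k n).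
  { intros k d n Hn; induction d. - rewrite Nat.add_0_r; auto.
    - rewrite Nat.add_succ_r. rewrite (proj1 (proj2 (Hrel' (k + d)))); auto.
      pose proof (Hmono k d); lia. }
  assert (HagC : forall k d n, n < NN k -> Cc (k + d) n = Cc k n).
  { intros k d n Hn; induction d. - rewrite Nat.add_0_r; auto.
    - rewrite Nat.add_succ_r. rewrite (proj1 (proj2 (proj2 (Hrel' (k + d))))); auto.
      pose proof (Hmono k d); lia. }
  set (p := fun n => P (S n) n).
  set (c := fun n => Cc (S n) n).
  assert (Hpath : forall n, edge T (p n) (c n) (p (S n))).
  { intros n. unfold p, c.
    replace (P (S (S n)) (S n)) with (P (S n) (S n)).
    - unfold P, Cc. destruct (proj2_sig (sq (S n))) as [Hp _]. apply Hp.
    - symmetry. replace (S (S n)) with (S n + 1) by lia. apply (HagP (S n) 1). apply Hge. }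
  assert (Hpref : forall k m, m <= NN k -> prefix c m = prefix (Cc k) m).
  { intros k m Hm. unfold prefix. apply map_ext_in. intros j Hj.
    apply in_seq in Hj. unfold c.
    destruct (Nat.le_gt_cases (S j) k).
    - replace k with (S j + (k - S j)) by lia. symmetry. apply HagC.
      pose proof (Hge (S j)); lia.
    - replace (S j) with (k + (S j - k)) by lia. apply HagC. lia. }
  destruct (Hsat p c Hpath) as [i Hi].
  apply HL in Hi. destruct Hi as [N0 HN0].
  destruct (sched_inf i N0) as [k [Hk Hsk]].
  destruct (Hrel' k) as [_ [_ [_ HLk]]]. rewrite Hsk in HLk.
  apply (HN0 (NN (S k))).
  - pose proof (Hge (S k)); lia.
  - rewrite (Hpref (S k)); auto.
Qed.

Definition LevelF {C} (T : pregraph C) (W : nat -> (nat -> C) -> Prop) (K : Type) (ltK : K -> K -> Prop)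
  : forall x : K, (forall y, ltK y x -> vert T -> Prop) -> vert T -> Prop :=
  fun x rec t => (forall y (h : ltK y x), ~ rec y h t) /\
     exists i, Good T (W i) (fun v => forall y (h : ltK y x), ~ rec y h v) t.

Definition Level {C} (T : pregraph C) W K ltK (wf : well_founded ltK) : K -> vert T -> Prop :=
  Fix wf (fun _ => vert T -> Prop) (LevelF T W K ltK).

Definition Rb {C} (T : pregraph C) W K ltK wf (x : K) (v : vert T) : Prop :=
  forall y, ltK y x -> ~ Level T W K ltK wf y v.

Lemma Level_eq {C} (T : pregraph C) W K ltK wf x t :
  Level T W K ltK wf x t <-> Rb T W K ltK wf x t /\ exists i, Good T (W i) (Rb T W K ltK wf x) t.
Proof.
  unfold Level at 1. rewrite Fix_eq.
  - unfold LevelF. reflexivity.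
  - intros x0 f g Hfg. assert (f = g).
    { apply functional_extensionality_dep; intros y.
      apply functional_extensionality_dep; intros h. apply Hfg. }
    subst; reflexivity.
Qed.

Definition subtree {C} (T : pregraph C) (S : vert T -> Prop) (r : vert T) : pregraph C :=
  {| vert := {q : list (C * vert T) | fpath T r q /\ Forall (fun e => S (snd e)) q};
     edge := fun a c b => exists y, proj1_sig b = proj1_sig a ++ [(c, y)] |}.

Definition sroot {C} (T : pregraph C) S r : vert (subtree T S r) :=
  exist _ [] (conj I (Forall_nil _)).

Lemma valid_prefix {C} (T : pregraph C) S r q1 q2 :
  fpath T r (q1 ++ q2) /\ Forall (fun e => S (snd e)) (q1 ++ q2) ->
  fpath T r q1 /\ Forall (fun e => S (snd e)) q1.
Proof.
  intros [H1 H2]. apply fpath_app in H1. apply Forall_app in H2. tauto.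
Qed.

Lemma subtree_ext {C} (T : pregraph C) S r (a : vert (subtree T S r)) s :
  fpath (subtree T S r) a s ->
  exists l, proj1_sig (fpath_end _ a s) = proj1_sig a ++ l /\ length l = length s.
Proof.
  revert a; induction s as [|[c b] s IH]; intros a Hs.
  - exists []. rewrite app_nil_r. auto.
  - destruct Hs as [[y Ey] Hs]. rewrite fpath_end_cons.
    destruct (IH b Hs) as [l [El Hl]]. exists ((c, y) :: l). split.
    + rewrite El, Ey, <- app_assoc. reflexivity.
    + simpl. auto.
Qed.

Lemma subtree_pretree {C} (T : pregraph C) S r : is_pretree (subtree T S r) (sroot T S r).
Proof.
  intros [q Hq].
  assert (Hex : forall q2 (q1 : list (C * vert T)) pf1 pf,
     exists s, fpath (subtree T S r) (exist _ q1 pf1) s /\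
       fpath_end (subtree T S r) (exist _ q1 pf1) s = exist _ (q1 ++ q2) pf).
  { induction q2 as [|x q2 IH]; intros q1 pf1 pf.
    - exists []. split; [exact I|]. apply sig_eq. simpl. rewrite app_nil_r. reflexivity.
    - assert (pf2 : fpath T r (q1 ++ [x]) /\ Forall (fun e => S (snd e)) (q1 ++ [x])).
      { apply (valid_prefix T S r _ q2). rewrite <- app_assoc. exact pf. }
      assert (pf' : fpath T r ((q1 ++ [x]) ++ q2) /\ Forall (fun e => S (snd e)) ((q1 ++ [x]) ++ q2)).
      { rewrite <- app_assoc. exact pf. }
      destruct (IH (q1 ++ [x]) pf2 pf') as [s [Hs Es]].
      exists ((fst x, exist _ (q1 ++ [x]) pf2) :: s). split.
      + split; [|exact Hs]. exists (snd x). simpl. destruct x; reflexivity.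
      + rewrite fpath_end_cons, Es. apply sig_eq. simpl. rewrite <- app_assoc. reflexivity. }
  destruct (Hex q [] (conj I (Forall_nil _)) Hq) as [s Hs].
  exists s. split; [exact Hs|].
  intros s' [Hs' Es'].
  destruct Hs as [Hs Es].
  assert (Es2 : fpath_end (subtree T S r) (sroot T S r) s = fpath_end (subtree T S r) (sroot T S r) s')
    by (rewrite Es'; exact Es).
  clear Es Es' Hq q Hex. rename Es2 into Es.
  change (fpath (subtree T S r) (sroot T S r) s) in Hs.
  revert Hs s' Hs' Es. generalize (sroot T S r) as a.
  induction s as [|[c b] s IH]; intros a Hs s' Hs' Es.
  - destruct s' as [|[c' b'] s']; [reflexivity|].
    exfalso. destruct (subtree_ext T S r a _ Hs') as [l [El Hl]].
    rewrite fpath_end_nil in Es. rewrite <- Es in El. simpl in Hl.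
    assert (length (proj1_sig a) = length (proj1_sig a ++ l)) by (rewrite <- El; reflexivity).
    rewrite length_app in H. lia.
  - destruct s' as [|[c' b'] s'].
    + exfalso. destruct (subtree_ext T S r a _ Hs) as [l [El Hl]].
      rewrite fpath_end_nil in Es. rewrite Es in El. simpl in Hl.
      assert (length (proj1_sig a) = length (proj1_sig a ++ l)) by (rewrite <- El; reflexivity).
      rewrite length_app in H. lia.
    + destruct Hs as [[y Ey] Hs]. destruct Hs' as [[y' Ey'] Hs'].
      rewrite !fpath_end_cons in Es.
      destruct (subtree_ext T S r b _ Hs) as [l [El _]].
      destruct (subtree_ext T S r b' _ Hs') as [l' [El' _]].
      assert (E2 : proj1_sig a ++ (c, y) :: l = proj1_sig a ++ (c', y') :: l').
      { rewrite <- Es in El'. rewrite El in El'. rewrite Ey, Ey' in El'.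
        rewrite <- !app_assoc in El'. exact El'. }
      apply app_inv_head in E2. injection E2; intros _ -> ->.
      assert (b = b') by (apply sig_eq; rewrite Ey, Ey'; reflexivity). subst b'.
      f_equal. apply (IH b); auto.
Qed.

Lemma subtree_card {C} (T : pregraph C) t0 S r :
  is_pretree T t0 -> card_le (vert (subtree T S r)) (vert T).
Proof.
  intros HT. exists (fun a => fpath_end T r (proj1_sig a)).
  intros a1 a2 E. apply sig_eq. destruct a1 as [q1 Hq1], a2 as [q2 Hq2].
  simpl in E |- *. destruct Hq1 as [H1 _], Hq2 as [H2 _].
  destruct (HT r) as [pr [[Hpr Epr] _]].
  destruct (HT (fpath_end T r q1)) as [s [_ Us]].
  assert (A1 : pr ++ q1 = s).
  { symmetry; apply Us. split.
    - apply fpath_app. rewrite Epr. auto.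
    - rewrite fpath_end_app, Epr. reflexivity. }
  assert (A2 : pr ++ q2 = s).
  { symmetry; apply Us. split.
    - apply fpath_app. rewrite Epr. auto.
    - rewrite fpath_end_app, Epr. auto. }
  rewrite <- A2 in A1. apply app_inv_head in A1. exact A1.
Qed.

Lemma subtree_sat {C} (T : pregraph C) (SS R : vert T -> Prop) Wi r :
  prefix_independent Wi -> (forall v, SS v -> Good T Wi R v) -> (forall v, SS v -> R v) ->
  satisfies (subtree T SS r) Wi.
Proof.
  intros Hpi HG HSR pp c Hp.
  set (p := fun n => fpath_end T r (proj1_sig (pp n))).
  assert (Hstep : forall n, edge T (p n) (c n) (p (S n)) /\ SS (p (S n))).
  { intros n. destruct (Hp n) as [y Ey]. unfold p.
    destruct (proj2_sig (pp (S n))) as [H1 H2]. rewrite Ey in H1, H2 |- *.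
    rewrite fpath_end_app. simpl. apply fpath_app in H1. destruct H1 as [_ [H1 _]].
    apply Forall_app in H2. destruct H2 as [_ H2]. inversion H2; subst. simpl in *. auto. }
  apply (shift_W Wi c 1 Hpi).
  apply (HG (p 1) (proj2 (Hstep 0)) (fun n => p (1 + n)) (fun n => c (1 + n)) eq_refl).
  - intros n. apply Hstep.
  - intros n. apply HSR. apply Hstep.
Qed.

Definition stepS {C} {T : pregraph C} (SS : vert T -> Prop) (st : vert T * list (C * vert T))
  (e : C * vert T) : vert T * list (C * vert T) :=
  if excluded_middle_informative (SS (fpath_end T (fst st) (snd st)) /\ SS (snd e))
  then (fst st, snd st ++ [e]) else (snd e, []).

Lemma fold_inv {C} (T : pregraph C) SS : forall s st v, fpath T v s ->
  fpath T (fst st) (snd st) -> Forall (fun e => SS (snd e)) (snd st) ->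
  fpath_end T (fst st) (snd st) = v ->
  fpath T (fst (fold_left (stepS SS) s st)) (snd (fold_left (stepS SS) s st)) /\
  Forall (fun e => SS (snd e)) (snd (fold_left (stepS SS) s st)) /\
  fpath_end T (fst (fold_left (stepS SS) s st)) (snd (fold_left (stepS SS) s st)) = fpath_end T v s.
Proof.
  induction s as [|[c y] s IH]; intros st v Hs H1 H2 H3.
  - simpl. auto.
  - destruct Hs as [He Hs]. simpl. rewrite fpath_end_cons.
    apply (IH _ y Hs).
    + unfold stepS. destruct (excluded_middle_informative _); simpl; [|exact I].
      apply fpath_app. split; auto. rewrite H3. simpl. auto.
    + unfold stepS. destruct (excluded_middle_informative _) as [[_ Hy]|]; simpl; [|constructor].
      apply Forall_app. split; auto.
    + unfold stepS. destruct (excluded_middle_informative _); simpl; [|reflexivity].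
      rewrite fpath_end_app, H3. reflexivity.
Qed.

Lemma embed {C} (W : nat -> (nat -> C) -> Prop) K (ltK : K -> K -> Prop) (U : nat -> pregraph C)
  (L : nat -> list C -> Prop)
  (HL : forall i w, W i w <-> exists N, forall n, N <= n -> ~ L i (prefix w n))
  (Hpi : forall i, prefix_independent (W i))
  (wf : well_founded ltK) (tr : forall x y z, ltK x y -> ltK y z -> ltK x z)
  (tri : forall x y, ltK x y \/ x = y \/ ltK y x)
  (Hu : forall i, universal K (W i) (U i))
  (T : pregraph C) t0 (HT : is_pretree T t0) (Hsz : card_lt (vert T) K)
  (Hsat : satisfies T (fun w => exists i, W i w)) :
  exists f, is_morphism T (lex_prod (direct_sum U) K ltK) f.
Proof.
  set (Lv := Level T W K ltK wf). set (R := Rb T W K ltK wf).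
  assert (HLeq : forall x t, Lv x t <-> R x t /\ exists i, Good T (W i) (R x) t) by (intros; apply Level_eq).
  assert (irr := wf_irrefl ltK wf).
  assert (disj : forall x y t, Lv x t -> Lv y t -> x = y).
  { intros x y t Hx Hy. destruct (tri x y) as [H|[H|H]]; auto.
    - exfalso. apply HLeq in Hy. destruct Hy as [Hy _]. exact (Hy x H Hx).
    - exfalso. apply HLeq in Hx. destruct Hx as [Hx _]. exact (Hx y H Hy). }
  assert (allL : forall t, exists x, Lv x t).
  { assert (Hx : exists x, forall t, ~ Lv x t).
    { apply NNPP; intro H. apply (proj2 Hsz).
      assert (H0 : forall x, exists t, Lv x t).
      { intro x; apply NNPP; intro H'; apply H; exists x; intros t Ht; apply H'; eauto. }
      exists (fun x => proj1_sig (constructive_indefinite_description _ (H0 x))).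
      intros x y E. apply (disj x y (proj1_sig (constructive_indefinite_description _ (H0 x)))).
      - exact (proj2_sig (constructive_indefinite_description _ (H0 x))).
      - rewrite E. exact (proj2_sig (constructive_indefinite_description _ (H0 y))). }
    destruct Hx as [x Hx]. intro t; apply NNPP; intro Hn.
    apply (no_bad_region T W L HL Hpi Hsat (R x)) with (v0 := t).
    - intros v i Hv HG. apply (Hx v). apply HLeq. split; eauto.
    - intros y _ Hy. apply Hn. eauto. }
  set (lvl := fun t => proj1_sig (constructive_indefinite_description _ (allL t))).
  assert (Hlvl : forall t, Lv (lvl t) t)
    by (intro t; exact (proj2_sig (constructive_indefinite_description _ (allL t)))).
  assert (Hmin : forall t, exists i, Good T (W i) (R (lvl t)) t /\
                   forall j, Good T (W j) (R (lvl t)) t -> i <= j).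
  { intro t. apply nat_min. apply HLeq. apply Hlvl. }
  set (idx := fun t => proj1_sig (constructive_indefinite_description _ (Hmin t))).
  assert (Hidx : forall t, Good T (W (idx t)) (R (lvl t)) t /\
                   forall j, Good T (W j) (R (lvl t)) t -> idx t <= j)
    by (intro t; exact (proj2_sig (constructive_indefinite_description _ (Hmin t)))).
  assert (HR : forall x t, Lv x t -> R x t) by (intros x t H; apply HLeq in H; tauto).
  assert (Hsucc : forall t c t', edge T t c t' -> lvl t' = lvl t \/ ltK (lvl t') (lvl t)).
  { intros t c t' He. destruct (tri (lvl t') (lvl t)) as [H|[H|H]]; [right; exact H|left; exact H|].
    exfalso.
    assert (Rt' : R (lvl t) t').
    { intros y Hy Hl. pose proof (HR _ _ (Hlvl t')) as Hr. exact (Hr y (tr _ _ _ Hy H) Hl). }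
    assert (Lt' : Lv (lvl t) t').
    { apply HLeq. split; auto. exists (idx t).
      apply (Good_succ T _ _ t c t' (Hpi _) (proj1 (Hidx t)) (HR _ _ (Hlvl t)) Rt' He). }
    pose proof (disj _ _ _ Lt' (Hlvl t')) as H0. rewrite H0 in H. exact (irr _ H). }
  assert (Hidxm : forall t c t', edge T t c t' -> lvl t' = lvl t -> idx t' <= idx t).
  { intros t c t' He E. apply (proj2 (Hidx t')). rewrite E.
    apply (Good_succ T _ _ t c t' (Hpi _) (proj1 (Hidx t)) (HR _ _ (Hlvl t))); auto.
    rewrite <- E. apply HR, Hlvl. }
  set (SS := fun x i t => lvl t = x /\ idx t = i).
  assert (HGex : forall x i r, exists g : vert (subtree T (SS x i) r) -> vert (U i),
                   is_morphism _ _ g).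
  { intros x i r. destruct (Hu i) as [_ [_ Hm]].
    apply (Hm _ (sroot T (SS x i) r) (subtree_pretree T _ r)).
    - destruct Hsz as [[h Hh] Hn]. destruct (subtree_card T t0 (SS x i) r HT) as [g Hg].
      split.
      + exists (fun a => h (g a)). intros a b E. apply Hg, Hh, E.
      + intros [k Hk]. apply Hn. exists (fun a => g (k a)). intros a b E. apply Hk, Hg, E.
    - apply (subtree_sat T (SS x i) (R x) (W i) r (Hpi i)).
      + intros v [E1 E2]. subst. apply Hidx.
      + intros v [E1 E2]. subst. apply HR, Hlvl. }
  set (G := fun x i r => proj1_sig (constructive_indefinite_description _ (HGex x i r))).
  assert (HGm : forall x i r, is_morphism _ _ (G x i r))
    by (intros; exact (proj2_sig (constructive_indefinite_description _ (HGex x i r)))).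
  assert (Hrp : forall t, exists s, fpath T t0 s /\ fpath_end T t0 s = t)
    by (intro t; destruct (HT t) as [s [Hs _]]; eauto).
  set (rp := fun t => proj1_sig (constructive_indefinite_description _ (Hrp t))).
  assert (Hrp' : forall t, fpath T t0 (rp t) /\ fpath_end T t0 (rp t) = t)
    by (intro t; exact (proj2_sig (constructive_indefinite_description _ (Hrp t)))).
  assert (Hrpu : forall t s, fpath T t0 s -> fpath_end T t0 s = t -> s = rp t).
  { intros t s H1 H2. destruct (HT t) as [s0 [_ Hu0]].
    rewrite <- (Hu0 s (conj H1 H2)). apply Hu0. apply Hrp'. }
  set (comp := fun x i t => fold_left (stepS (SS x i)) (rp t) (t0, [])).
  assert (Hinv : forall x i t, (fpath T (fst (comp x i t)) (snd (comp x i t)) /\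
      Forall (fun e => SS x i (snd e)) (snd (comp x i t))) /\
      fpath_end T (fst (comp x i t)) (snd (comp x i t)) = t).
  { intros x i t.
    destruct (fold_inv T (SS x i) (rp t) (t0, []) t0 (proj1 (Hrp' t)) I (Forall_nil _) eq_refl)
      as [A [B D]].
    split; [split; assumption|]. unfold comp. rewrite D. apply Hrp'. }
  set (Fv := fun x i t => G x i (fst (comp x i t)) (exist _ (snd (comp x i t)) (proj1 (Hinv x i t)))).
  assert (HFv : forall x i (st1 st2 : vert T * list (C * vert T)) pf1 pf2 c y,
     st2 = (fst st1, snd st1 ++ [(c, y)]) ->
     edge (U i) (G x i (fst st1) (exist _ (snd st1) pf1)) c (G x i (fst st2) (exist _ (snd st2) pf2))).
  { intros x i [r1 q1] [r2 q2] pf1 pf2 c y E. injection E; intros; subst. simpl in *.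
    apply HGm. simpl. exists y. reflexivity. }
  exists (fun t => (existT (fun j => vert (U j)) (idx t) (Fv (lvl t) (idx t) t), lvl t)).
  intros t c t' He. simpl.
  destruct (Hsucc t c t' He) as [E|H]; [|left; exact H].
  right. split; [exact E|].
  pose proof (Hidxm t c t' He E) as Hle.
  destruct (Nat.lt_ge_cases (idx t') (idx t)) as [Hlt|Hge]; [left; exact Hlt|].
  right. assert (Ei : idx t' = idx t) by lia.
  rewrite E, Ei.
  exists (idx t), (Fv (lvl t) (idx t) t), (Fv (lvl t) (idx t) t').
  split; [reflexivity|]. split; [reflexivity|].
  unfold Fv. apply HFv with (y := t').
  assert (Ep : rp t' = rp t ++ [(c, t')]).
  { symmetry. apply Hrpu.
    - apply fpath_app. split; [apply Hrp'|]. rewrite (proj2 (Hrp' t)). simpl. auto.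
    - rewrite fpath_end_app, (proj2 (Hrp' t)). reflexivity. }
  pose proof (proj2 (Hinv (lvl t) (idx t) t)) as Ht.
  unfold comp in Ht |- *. rewrite Ep, fold_left_app. simpl. unfold stepS at 1.
  destruct (excluded_middle_informative _) as [_|Hn]; [reflexivity|].
  exfalso. apply Hn. rewrite Ht. unfold SS. simpl. rewrite E, Ei. auto.
Qed.

Lemma ds_tail {C} (U : nat -> pregraph C) (i : nat) (q : nat -> vert (direct_sum U)) (c : nat -> C) :
  (forall n, projT1 (q n) = i) -> (forall n, edge (direct_sum U) (q n) (c n) (q (S n))) ->
  exists pv : nat -> vert (U i), forall n, edge (U i) (pv n) (c n) (pv (S n)).
Proof.
  intros H He.
  exists (fun n => eq_rect _ (fun j => vert (U j)) (projT2 (q n)) i (H n)).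
  intros n. generalize (H n) (H (S n)).
  destruct (He n) as [Hlt | [j [v [v' [E1 [E2 Ee]]]]]].
  - rewrite (H n), (H (S n)) in Hlt. lia.
  - rewrite E1, E2. simpl. intros e1 e2. subst i. rewrite (UIP_refl_nat _ e2). simpl. exact Ee.
Qed.

Theorem lemma6p10 (C : Type) (W : nat -> (nat -> C) -> Prop)
  (K : Type) (ltK : K -> K -> Prop) (U : nat -> pregraph C) :
  (forall i, Sigma02 (W i)) ->
  (forall i, prefix_independent (W i)) ->
  is_cardinal K ltK ->
  (forall i, is_graph (U i)) ->
  (forall i, universal K (W i) (U i)) ->
  universal K (fun w => exists i, W i w) (lex_prod (direct_sum U) K ltK).
Proof.
  intros HS Hpi [wf [tr [tri _]]] Hg Hu.
  set (L := fun i => proj1_sig (constructive_indefinite_description _ (HS i))).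
  assert (HL : forall i w, W i w <-> exists N, forall n, N <= n -> ~ L i (prefix w n))
    by (intros i; exact (proj2_sig (constructive_indefinite_description _ (HS i)))).
  split; [|split].
  - intros [[i v] k]. destruct (Hg i v) as [c [v' He]]. exists c, (existT _ i v', k).
    simpl. right. split; auto. right. exists i, v, v'. auto.
  - intros p c He.
    destruct (wf_eventually ltK wf tr (fun n => snd (p n))) as [N1 HN1].
    { intros n. destruct (He n) as [H|[H _]]; [left|right]; auto. }
    assert (Hk : forall n, N1 <= n -> edge (direct_sum U) (fst (p n)) (c n) (fst (p (S n)))).
    { intros n Hn. destruct (He n) as [H|[_ H]]; [|exact H].
      exfalso. rewrite (HN1 n Hn), (HN1 (S n)) in H by lia. exact (wf_irrefl ltK wf _ H). }
    destruct (wf_eventually lt lt_wf Nat.lt_trans (fun n => projT1 (fst (p (N1 + n))))) as [N2 HN2].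
    { intros n. simpl. rewrite Nat.add_succ_r.
      destruct (Hk (N1 + n)) as [H|[j [v [v' [E1 [E2 _]]]]]]; [lia|left|right].
      - exact H.
      - apply (f_equal (fun x : {k & vert (U k)} => projT1 x)) in E1, E2. simpl in E1, E2. congruence. }
    set (i := projT1 (fst (p (N1 + N2)))).
    destruct (ds_tail U i (fun n => fst (p (N1 + N2 + n))) (fun n => c (N1 + N2 + n))) as [pv Hpv].
    + intros n. simpl. rewrite <- Nat.add_assoc. apply (HN2 (N2 + n)). lia.
    + intros n. simpl. rewrite Nat.add_succ_r. apply Hk. lia.
    + exists i. destruct (Hu i) as [_ [Hs _]].
      apply (shift_W (W i) c (N1 + N2) (Hpi i)). exact (Hs pv _ Hpv).
  - intros T t0 HT Hsz Hsat.
    exact (embed W K ltK U L HL Hpi wf tr tri Hu T t0 HT Hsz Hsat).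
Qed.
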